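(* Let $G$ be a finite group, $D$ a Dedekind domain of characteristic $0$, and $A$ a $DG$-module which is a $P$-module for some maximal ideal $P$ of $D$. If $\mathrm{char}(D/P)=0$ and $\mathrm{sr}_{DG}(A)=r\in\mathbb{N}$, then $A$ is an Artinian $D$-module.
   Context: $A$ is a $P$-module if for every $a\in A$ there is $n\in\mathbb{N}$ with $aP^n=0$. A generating subset of a submodule is minimal if no proper subset generates it; $\mathrm{sr}_{DG}(A)=r$ means every finitely generated $DG$-submodule of $A$ can be generated by $r$ elements and some finitely generated $DG$-submodule has a minimal generating subset of exactly $r$ elements. *)

(* Defs.v *)
From HB Require Import structures.
From mathcomp Require Import all_boot all_order all_algebra fingroup fraction.
Set Implicit Arguments. Unset Strict Implicit. Unset Printing Implicit Defensive.
Import Order.TTheory GRing.Theory.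
Local Open Scope ring_scope.

Section RingDefs.
Variable D : idomainType.

Definition ideal (I : D -> Prop) : Prop :=
  [/\ I 0, (forall x y, I x -> I y -> I (x - y)) & (forall r x, I x -> I (r * x))].

Definition proper_ideal (I : D -> Prop) : Prop := ideal I /\ ~ I 1.

Definition prime_ideal (I : D -> Prop) : Prop :=
  proper_ideal I /\ (forall x y, I (x * y) -> I x \/ I y).

Definition maximal_ideal (I : D -> Prop) : Prop :=
  proper_ideal I /\
  (forall J, ideal J -> (forall x, I x -> J x) -> (forall x, J x <-> I x) \/ J 1).

Definition ideal_gen (s : seq D) (x : D) : Prop :=
  exists c : seq D, x = \sum_(i < size s) c`_i * s`_i.

Definition noetherian_ring : Prop :=
  forall I, ideal I -> exists s : seq D, forall x, I x <-> ideal_gen s x.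

Definition integrally_closed : Prop :=
  forall x : {fraction D},
    (exists p : {poly D}, p \is monic /\ root (map_poly (@FracField.tofrac D) p) x) ->
    exists d : D, x = FracField.tofrac d.

Definition dedekind_domain : Prop :=
  [/\ noetherian_ring, integrally_closed &
      forall I, prime_ideal I -> (exists x, I x /\ x != 0) -> maximal_ideal I].

(* char(D/P) = 0 : no positive integer n maps to 0 in D/P, i.e. n%:R \notin P. *)
Definition quot_char0 (P : D -> Prop) : Prop := forall n : nat, ~ P (n.+1)%:R.

End RingDefs.

Section ModDefs.
Variables (gT : finGroupType) (D : idomainType) (A : lmodType D).
Variable act : gT -> A -> A.

Definition DG_module : Prop :=
  [/\ forall g x y, act g (x + y) = act g x + act g y,
      forall g (d : D) x, act g (d *: x) = d *: act g x,
      forall x, act 1%g x = x &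
      forall g h x, act (g * h)%g x = act g (act h x)].

Definition Dsubmodule (B : A -> Prop) : Prop :=
  [/\ B 0, (forall x y, B x -> B y -> B (x + y)) & (forall (d : D) x, B x -> B (d *: x))].

Definition DGsubmodule (B : A -> Prop) : Prop :=
  Dsubmodule B /\ (forall g x, B x -> B (act g x)).

Definition DGgen (s : seq A) (x : A) : Prop :=
  forall B, DGsubmodule B -> (forall y, y \in s -> B y) -> B x.

Definition generates (s : seq A) (B : A -> Prop) : Prop :=
  forall x, DGgen s x <-> B x.

Definition minimal_generating (s : seq A) (B : A -> Prop) : Prop :=
  generates s B /\
  forall t : seq A, {subset t <= s} -> ~ {subset s <= t} -> ~ generates t B.

Definition special_rank_DG (r : nat) : Prop :=
  (forall s : seq A, exists t : seq A, size t <= r /\ generates t (DGgen s))%N /\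
  (exists s t : seq A, uniq t /\ size t = r /\ minimal_generating t (DGgen s)).

(* A is a P-module: every a is annihilated by P^n for some n
   (P^n is additively generated by products of n elements of P). *)
Definition P_module (P : D -> Prop) : Prop :=
  forall a : A, exists n : nat, forall ps : seq D,
    size ps = n -> (forall p, p \in ps -> P p) -> (\prod_(p <- ps) p) *: a = 0.

Definition artinian_Dmodule : Prop :=
  forall B : nat -> A -> Prop,
    (forall n, Dsubmodule (B n)) ->
    (forall n x, B n.+1 x -> B n x) ->
    exists N, forall m, (N <= m)%N -> forall x, B m x <-> B N x.

End ModDefs.

(* Main.v *)
Require Import Defs.
From HB Require Import structures.
From mathcomp Require Import all_boot all_order all_algebra fingroup fraction generic_quotient.
From mathcomp Require Import ring.
From Stdlib Require Import Classical ClassicalEpsilon.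
Set Implicit Arguments. Unset Strict Implicit. Unset Printing Implicit Defensive.
Import Order.TTheory GRing.Theory.
Local Open Scope ring_scope.

Section Alg.
Variable D : idomainType.
Implicit Types (I J : D -> Prop) (x y d : D).

Lemma ideal0 I : ideal I -> I 0. Proof. by case. Qed.
Lemma idealB I x y : ideal I -> I x -> I y -> I (x - y). Proof. by case=> _ h _; apply: h. Qed.
Lemma idealM I r x : ideal I -> I x -> I (r * x). Proof. by case=> _ _ h; apply: h. Qed.
Lemma idealMr I r x : ideal I -> I x -> I (x * r). Proof. by move=> hI hx; rewrite mulrC; apply: idealM. Qed.
Lemma idealN I x : ideal I -> I x -> I (- x).
Proof. by move=> hI hx; rewrite -sub0r; apply: idealB => //; apply: ideal0. Qed.
Lemma idealD I x y : ideal I -> I x -> I y -> I (x + y).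
Proof. by move=> hI hx hy; rewrite -[y]opprK; apply: idealB => //; apply: idealN. Qed.
Lemma ideal_sum I n (F : 'I_n -> D) : ideal I -> (forall i, I (F i)) -> I (\sum_(i < n) F i).
Proof.
move=> hI hF; elim/big_ind: _ => //; first exact: ideal0.
by move=> a b; apply: idealD.
Qed.

Lemma ideal_gen_ideal (s : seq D) : ideal (ideal_gen s).
Proof.
split.
- by exists (nseq (size s) 0); apply/esym/big1 => i _; rewrite nth_nseq if_same mul0r.
- move=> a b [c ->] [e ->]; exists [seq c`_i - e`_i | i <- iota 0 (size s)].
  rewrite -sumrB; apply: eq_bigr => i _.
  by rewrite (nth_map 0%N) ?size_iota // nth_iota // add0n mulrBl.
- move=> r a [c ->]; exists [seq r * c`_i | i <- iota 0 (size s)].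
  rewrite mulr_sumr; apply: eq_bigr => i _.
  by rewrite (nth_map 0%N) ?size_iota // nth_iota // add0n mulrA.
Qed.

Lemma ideal_gen_sub (s : seq D) I : ideal I -> (forall i, (i < size s)%N -> I s`_i) ->
  forall x, ideal_gen s x -> I x.
Proof.
move=> hI hs x [c ->]; apply: ideal_sum => // i.
by apply: idealM => //; apply: hs.
Qed.

Lemma ideal_gen_mem (s : seq D) i : (i < size s)%N -> ideal_gen s s`_i.
Proof.
move=> hi; exists [seq (j == i)%:R | j <- iota 0 (size s)].
rewrite (bigD1 (Ordinal hi)) //= big1 ?addr0.
  by rewrite (nth_map 0%N) ?size_iota // nth_iota // add0n eqxx mul1r.
move=> j hj; rewrite (nth_map 0%N) ?size_iota // nth_iota // add0n.
have hj' : nat_of_ord j != i by apply: contra hj => /eqP h; apply/eqP/val_inj.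
by rewrite (negbTE hj') mul0r.
Qed.

Lemma acc_ideal : noetherian_ring D -> forall I : nat -> D -> Prop,
  (forall n, ideal (I n)) -> (forall n x, I n x -> I n.+1 x) ->
  exists K, forall x, I K.+1 x -> I K x.
Proof.
move=> hN I hI hmono.
have mono : forall n m x, (n <= m)%N -> I n x -> I m x.
  move=> n m x /subnK <-; elim: (m - n)%N => //= k ih h; exact: hmono (ih h).
pose U x := exists n, I n x.
have hU : ideal U.
  split; first by exists 0%N; apply: ideal0.
  - move=> a b [n ha] [k hb]; exists (maxn n k); apply: idealB => //.
    + exact: mono (leq_maxl _ _) ha.
    + exact: mono (leq_maxr _ _) hb.
  - by move=> r a [n ha]; exists n; apply: idealM.
have [s hs] := hN U hU.
have hK : forall k, (k <= size s)%N -> exists K, forall i, (i < k)%N -> I K s`_i.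
  elim=> [|k ih] hk; first by exists 0%N.
  have [K hK] := ih (ltnW hk).
  have [n hn] : U s`_k by apply/hs/ideal_gen_mem.
  exists (maxn K n) => i; rewrite ltnS leq_eqVlt => /orP[/eqP ->|hi].
    exact: mono (leq_maxr _ _) hn.
  exact: mono (leq_maxl _ _) (hK _ hi).
have [K hKs] := hK _ (leqnn _).
exists K => x hx.
apply: (ideal_gen_sub (hI K) hKs).
by apply/hs; exists K.+1.
Qed.

Lemma noeth_max (T : Type) (good : T -> Prop) (J : T -> D -> Prop) t0 :
  noetherian_ring D -> (forall t, ideal (J t)) -> good t0 ->
  exists t, good t /\ forall t', good t' -> (forall d, J t d -> J t' d) ->
    forall d, J t' d -> J t d.
Proof.
move=> hN hJ g0; apply: NNPP => hno.
have step : forall t, exists t', good t -> good t' /\ (forall d, J t d -> J t' d) /\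
    exists d, J t' d /\ ~ J t d.
  move=> t; case: (classic (good t)) => [g|ng]; last by exists t.
  apply: NNPP => h2; apply: hno; exists t; split=> // t' g' sub d hd.
  apply: NNPP => nd; apply: h2; exists t' => _; split=> //; split=> //.
  by exists d.
pose F t := proj1_sig (constructive_indefinite_description _ (step t)).
have hF : forall t, good t -> good (F t) /\ (forall d, J t d -> J (F t) d) /\
    exists d, J (F t) d /\ ~ J t d.
  by move=> t; rewrite /F; case: (constructive_indefinite_description _ _).
pose sq n := iter n F t0.
have gs : forall n, good (sq n) by elim=> //= n ih; case: (hF _ ih).
have [K hK] := acc_ideal hN (fun n => hJ (sq n)) (fun n x => (hF _ (gs n)).2.1 x).
have [d [hd nd]] := (hF _ (gs K)).2.2.
exact: nd (hK _ hd).
Qed.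


Lemma frac_repr (x : {fraction D}) :
  exists a b : D, b != 0 /\ x * FracField.tofrac b = FracField.tofrac a.
Proof.
set r := generic_quotient.repr x.
exists (r.1), (r.2); split; first exact: denom_ratioP.
have -> : x = generic_quotient.pi _ r by rewrite generic_quotient.reprK.
unlock FracField.tofrac.
have H := FracField.pi_mul r (Ratio r.2 1).
rewrite /GRing.mul /=; etransitivity; first exact: (esym H).
apply/eqmodP => /=.
rewrite FracField.equivfE /FracField.mulf.
have h1 : (1:D) != 0 by exact: oner_neq0.
have h2 := denom_ratioP r.
by rewrite !numden_Ratio ?mulf_neq0 // !mulr1 mulrC.
Qed.

Lemma lin_dep n M (X : 'M[D]_(n, M)) : (M < n)%N ->
  exists d : 'rV[D]_n, d != 0 /\ d *m X = 0.
Proof.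
move=> hMn.
pose tf := @FracField.tofrac D.
pose Xf := map_mx tf X.
have nrf : ~~ row_free Xf.
  rewrite /row_free; apply/negP => /eqP h.
  by have := rank_leq_col Xf; rewrite h leqNgt hMn.
have kn0 : kermx Xf != 0 by rewrite kermx_eq0.
have [i hi] : exists i, row i (kermx Xf) != 0.
  apply: NNPP => hno; move/negP: kn0; apply; apply/eqP/row_matrixP => i.
  rewrite row0; apply/eqP; apply: NNPP => h; apply: hno; exists i; exact/negP.
set v := row i (kermx Xf) in hi.
have vX : v *m Xf = 0 by rewrite /v -row_mul mulmx_ker row0.
clearbody v.
have hrep : forall j : 'I_n, exists ab : D * D, ab.2 != 0 /\ v 0 j * tf ab.2 = tf ab.1.
  by move=> j; have [a [b [b0 e]]] := frac_repr (v 0 j); exists (a, b).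
have [ab hab] := fin_all_exists hrep.
pose B := \prod_(j < n) (ab j).2.
have B0 : B != 0 by rewrite /B; apply/prodf_neq0 => j _; case: (hab j).
pose d : 'rV[D]_n := \row_j ((ab j).1 * \prod_(l < n | l != j) (ab l).2).
have dv : map_mx tf d = tf B *: v.
  apply/rowP => j.
  have Bj : B = (ab j).2 * \prod_(l < n | l != j) (ab l).2 by rewrite /B (bigD1 j).
  rewrite !mxE Bj /tf (tofracM (ab j).1) (tofracM (ab j).2).
  have e := (hab j).2; rewrite /tf in e; rewrite -e; ring.
have tfB0 : tf B != 0 by rewrite /tf tofrac_eq0.
exists d; split.
  apply/eqP => d0; move: dv; rewrite d0 map_mx0 => /esym /eqP.
  by rewrite scaler_eq0 (negbTE tfB0) (negbTE hi).
apply/matrixP => a b; apply/eqP; rewrite [X in _ == X]mxE -(tofrac_eq0 (R:=D)).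
have := congr1 (fun Mx : 'M_(1, M) => Mx a b) (map_mxM tf d X).
rewrite /= dv -/Xf -scalemxAl vX scaler0 !mxE => <-.
by [].
Qed.

Section MaxIdeal.
Variable P : D -> Prop.
Hypothesis hP : maximal_ideal P.

Lemma P_ideal : ideal P. Proof. by case: hP => [[]]. Qed.
Lemma P_not1 : ~ P 1. Proof. by case: hP => [[]]. Qed.

Lemma comax a : ~ P a -> exists p e, P p /\ 1 = p + e * a.
Proof.
move=> na.
pose J x := exists p e, P p /\ x = p + e * a.
have hJ : ideal J.
  split.
  - by exists 0, 0; split; [exact: ideal0 P_ideal| rewrite mul0r addr0].
  - move=> x y [p [e [hp ->]]] [q [f [hq ->]]]; exists (p - q), (e - f); split.
      exact: idealB P_ideal hp hq.
    by rewrite mulrBl opprD addrACA.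
  - move=> r x [p [e [hp ->]]]; exists (r * p), (r * e); split.
      exact: idealM P_ideal hp.
    by rewrite mulrDr mulrA.
case: hP => _ /(_ J hJ) [].
- by move=> x hx; exists x, 0; rewrite mul0r addr0.
- by move=> h; exfalso; apply: na; apply/h; exists 0, 1; rewrite add0r mul1r; split=> //; exact: ideal0 P_ideal.
- by [].
Qed.

Lemma P_prime a b : P (a * b) -> P a \/ P b.
Proof.
move=> hab; case: (classic (P a)) => [|na]; first by left.
right; have [p [e [hp h1]]] := comax na.
have -> : b = p * b + e * (a * b) by rewrite mulrA -mulrDl -h1 mul1r.
apply: idealD P_ideal _ _; first exact: idealMr P_ideal hp.
exact: idealM P_ideal hab.
Qed.

Lemma notP_mul a b : ~ P a -> ~ P b -> ~ P (a * b).
Proof. by move=> na nb /P_prime []. Qed.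

Lemma notP_prod n (F : 'I_n -> D) (Q : pred 'I_n) : (forall i, ~ P (F i)) -> ~ P (\prod_(i < n | Q i) F i).
Proof.
move=> hF; elim/big_ind: _ => //; first exact: P_not1.
by move=> a b; apply: notP_mul.
Qed.


Lemma exists_pi : dedekind_domain D ->
  exists pi, P pi /\ forall p, P p -> exists u e, ~ P u /\ u * p = e * pi.
Proof.
case=> hN hIC hdim.
have PI := P_ideal.
case: (classic (exists x, P x /\ x != 0)) => [[x [Px x0]] | hz]; last first.
  exists 0; split; first exact: ideal0 PI.
  move=> p Pp; exists 1, 0; split; first exact: P_not1.
  case: (eqVneq p 0) => [->|pn0]; first by rewrite mulr0 mul0r.
  by exfalso; apply: hz; exists p.
pose sat d := exists s f, ~ P s /\ s * d = f * x.
have hsat : ideal sat.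
  split.
  - by exists 1, 0; split; [exact: P_not1 | rewrite mulr0 mul0r].
  - move=> a b [s1 [f1 [n1 e1]]] [s2 [f2 [n2 e2]]].
    exists (s1 * s2), (s2 * f1 - s1 * f2); split; first exact: notP_mul.
    have -> : s1 * s2 * (a - b) = s2 * (s1 * a) - s1 * (s2 * b) by ring.
    by rewrite e1 e2; ring.
  - move=> r a [s [f [ns e]]]; exists s, (r * f); split=> //.
    by rewrite mulrCA e mulrA.
pose col y d := sat (d * y).
have hcol : forall y, ideal (col y).
  move=> y; split.
  - by rewrite /col mul0r; exact: ideal0 hsat.
  - by move=> a b ha hb; rewrite /col mulrBl; apply: idealB.
  - by move=> r a ha; rewrite /col -mulrA; apply: idealM.
have g1 : ~ sat 1.
  move=> [s [f [ns e]]]; apply: ns; rewrite -[s]mulr1 e.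
  exact: idealM PI Px.
have [Y [gY maxY]] := @noeth_max _ (fun y => ~ sat y) col 1 hN hcol g1.
have colP : forall d, P d <-> col Y d.
  have hpr : prime_ideal (col Y).
    split; first by split; [exact: hcol | rewrite /col mul1r].
    move=> a b hab; case: (classic (col Y a)) => [|na]; first by left.
    right.
    have sub : forall d, col Y d -> col (a * Y) d.
      by move=> d; rewrite /col mulrCA; apply: idealM.
    have := maxY (a * Y) na sub b.
    by rewrite /col mulrA [b * a]mulrC; apply.
  have hnz : exists z, col Y z /\ z != 0.
    by exists x; split=> //; exists 1, Y; split; [exact: P_not1|rewrite mul1r mulrC].
  have [_ hm] := hdim _ hpr hnz.
  have sub : forall d, col Y d -> P d.
    move=> d hd; apply: NNPP => nd; apply: gY.
    case: hd => [s [f [ns e]]]; exists (s * d), f; split; first exact: notP_mul.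
    by rewrite -mulrA.
  case: (hm P PI sub) => [h|h]; last by exfalso; apply: P_not1.
  by move=> d; split; [move/h|apply: sub].
have Y0 : Y != 0 by apply: contra_notN gY => /eqP ->; exact: ideal0 hsat.
case: (classic (exists p0 s0 f0, [/\ P p0, ~ P s0, ~ P f0 & s0 * (p0 * Y) = f0 * x]))
  => [[p0 [s0 [f0 [Pp0 ns0 nf0 e0]]]] | hB].
  exists p0; split=> // p Pp.
  have [s [f [ns e]]] := (colP p).1 Pp.
  exists (f0 * s), (f * s0); split; first exact: notP_mul.
  apply: (mulIf Y0).
  rewrite (_ : f0 * s * p * Y = f0 * (s * (p * Y))); last by ring.
  rewrite e (_ : f * s0 * p0 * Y = f * (s0 * (p0 * Y))); last by ring.
  by rewrite e0; ring.
exfalso.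
have hB' : forall p s f, P p -> ~ P s -> s * (p * Y) = f * x -> P f.
  move=> p s f Pp ns e; apply: NNPP => nf; apply: hB; exists p, s, f; by split.
have [ps hps] := hN P PI.
pose k := size ps.
have Pps : forall j : 'I_k, P ps`_j by move=> j; apply/hps/ideal_gen_mem.
have ex : forall j : 'I_k, exists sc : D * seq D, ~ P sc.1 /\
    sc.1 * (ps`_j * Y) = (\sum_(l < k) sc.2`_l * ps`_l) * x.
  move=> j; have [s0 [f1 [ns1 e1]]] := (colP _).1 (Pps j).
  have [c ec] := (hps f1).1 (hB' _ _ _ (Pps j) ns1 e1).
  by exists (s0, c); split=> //=; rewrite -ec.
have [sc hsc] := fin_all_exists ex.
pose s j := (sc j).1.
pose c j l := (sc j).2`_l.
pose S := \prod_(j < k) s j.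
pose S' j := \prod_(l < k | l != j) s l.
have SS : forall j, S = s j * S' j by move=> j; rewrite /S (bigD1 j).
pose tf := @FracField.tofrac D.
pose N0 : 'M[D]_k := \matrix_(l, j) (S' j * c j l).
pose v : 'rV[{fraction D}]_k := \row_j tf (ps`_j).
pose w := tf (S * Y) / tf x.
have x0F : tf x != 0 by rewrite /tf tofrac_eq0.
have ev : v *m map_mx tf N0 = w *: v.
  apply/rowP => j; rewrite !mxE.
  have eqD : (\sum_(l < k) ps`_l * (S' j * c j l)) * x = S * Y * ps`_j.
    rewrite (SS j); have [_ ej] := hsc j.
    rewrite (_ : \sum_(l < k) ps`_l * (S' j * c j l) = S' j * \sum_(l < k) (sc j).2`_l * ps`_l).
      rewrite -mulrA -ej /s; ring.
    by rewrite mulr_sumr; apply: eq_bigr => l _; rewrite /c; ring.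
  rewrite (eq_bigr (fun l : 'I_k => tf (ps`_l * (S' j * c j l)))); last first.
    by move=> l _; rewrite !mxE /tf; symmetry; apply: rmorphM.
  rewrite /tf -rmorph_sum.
  have -> : w * FracField.tofrac ps`_j = FracField.tofrac (S * Y * ps`_j) / FracField.tofrac x.
    by rewrite /w /tf mulrAC -tofracM.
  by rewrite -eqD tofracM mulfK.
have vn0 : v != 0.
  apply/negP => /eqP v0; apply/negP: x0; apply/negPn/eqP.
  have [cc ->] := (hps x).1 Px.
  apply: big1 => i _.
  have := congr1 (fun M : 'rV_k => M 0 i) v0; rewrite !mxE /tf => /eqP.
  by rewrite tofrac_eq0 => /eqP ->; rewrite mulr0.
have hev : eigenvalue (map_mx tf N0) w by apply/eigenvalueP; exists v.
move: hev; rewrite eigenvalue_root_char -map_char_poly => hroot.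
have [d hd] := hIC w (ex_intro _ (char_poly N0) (conj (char_poly_monic _) hroot)).
apply: gY; exists S, d; split; first by apply: notP_prod => j; case: (hsc j).
apply/eqP; rewrite -tofrac_eq !tofracM.
by move: hd; rewrite /w /tf => <-; rewrite tofracM mulfVK.
Qed.

Lemma val_bound pi v : noetherian_ring D -> P pi -> pi != 0 -> v != 0 ->
  ~ (forall k, exists U e, ~ P U /\ U * v = e * pi ^+ k).
Proof.
move=> hN Ppi pi0 v0 hall.
have PI := P_ideal.
pose H k d := exists u f, ~ P u /\ u * pi ^+ k * d = f * v.
have hH : forall k, ideal (H k).
  move=> k; split.
  - by exists 1, 0; split; [exact: P_not1 | rewrite mulr0 mul0r].
  - move=> a b [u1 [f1 [n1 e1]]] [u2 [f2 [n2 e2]]].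
    exists (u1 * u2), (u2 * f1 - u1 * f2); split; first exact: notP_mul.
    have -> : u1 * u2 * pi ^+ k * (a - b) = u2 * (u1 * pi ^+ k * a) - u1 * (u2 * pi ^+ k * b) by ring.
    by rewrite e1 e2; ring.
  - move=> r a [u [f [nu e]]]; exists u, (r * f); split=> //.
    have -> : u * pi ^+ k * (r * a) = r * (u * pi ^+ k * a) by ring.
    by rewrite e; ring.
have hmono : forall k d, H k d -> H k.+1 d.
  move=> k d [u [f [nu e]]]; exists u, (pi * f); split=> //.
  rewrite exprS (_ : u * (pi * pi ^+ k) * d = pi * (u * pi ^+ k * d)); last by ring.
  by rewrite e; ring.
have [K hK] := acc_ideal hN hH hmono.
have [U [e [nU eU]]] := hall K.+1.
have He : H K.+1 e by exists 1, U; split; [exact: P_not1 | rewrite mul1r mulrC eU].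
have [u [f [nu eu]]] := hK _ He.
have U0 : U != 0 by apply: contra_notN nU => /eqP ->; exact: ideal0 PI.
have e0 : e != 0.
  apply/eqP => e0; move: eU; rewrite e0 mul0r => /eqP.
  by rewrite mulf_eq0 (negbTE U0) (negbTE v0).
have hne : pi ^+ K * e != 0 by rewrite mulf_neq0 // expf_neq0.
have eq1 : u * U * (pi ^+ K * e) = f * pi * (pi ^+ K * e).
  rewrite (_ : u * U * (pi ^+ K * e) = U * (u * pi ^+ K * e)); last by ring.
  rewrite eu (_ : U * (f * v) = f * (U * v)); last by ring.
  by rewrite eU exprS; ring.
have := mulIf hne eq1 => euU.
apply: (notP_mul nu nU); rewrite euU; exact: idealM PI Ppi.
Qed.
End MaxIdeal.
End Alg.
Definition stable_at (Q : nat -> nat -> bool) N := forall i, (N <= i)%N -> forall k, Q i k = Q N k.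

Lemma stable_mono Q N N' : stable_at Q N -> (N <= N')%N -> stable_at Q N'.
Proof. by move=> h hN i hi k; rewrite h ?(leq_trans hN hi) // h. Qed.

Lemma down_k (Q : nat -> nat -> bool) : (forall i k, Q i k.+1 -> Q i k) ->
  forall i k k', (k' <= k)%N -> Q i k -> Q i k'.
Proof.
move=> h i k k' /subnK <-; elim: (k - k')%N => //= n ih.
by rewrite addSn => /h.
Qed.

Lemma down_i (Q : nat -> nat -> bool) : (forall i k, Q i.+1 k -> Q i k) ->
  forall i i' k, (i' <= i)%N -> Q i k -> Q i' k.
Proof.
move=> h i i' k /subnK <-; elim: (i - i')%N => //= n ih.
by rewrite addSn => /h.
Qed.

Lemma DS_aux k0 : forall Q : nat -> nat -> bool,
  (forall i k, Q i.+1 k -> Q i k) -> (forall i k, Q i k.+1 -> Q i k) ->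
  ~~ Q 0 k0 -> exists N, stable_at Q N.
Proof.
elim: k0 => [|k0 ih] Q hi hk hn.
  have F : forall i k, Q i k = false.
    move=> i k; apply/negbTE/negP => hq; move/negP: hn; apply.
    apply: (down_k hk (leq0n k)); exact: (down_i hi (leq0n i) hq).
  by exists 0%N => i _ k; rewrite !F.
case: (classic (forall i, Q i k0)) => [hall | ].
  exists 0%N => i _ k.
  have ev : forall i, Q i k = (k <= k0)%N.
    move=> i'; case: (leqP k k0) => hkk.
      exact: (down_k hk hkk (hall i')).
    apply/negbTE/negP => hq; move/negP: hn; apply.
    exact: (down_k hk hkk) (down_i hi (leq0n i') hq).
  by rewrite !ev.
move=> /not_all_ex_not [i1 hi1].
have hn' : ~~ Q (i1 + 0)%N k0 by rewrite addn0; apply/negP.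
have hi' : forall i k, Q (i1 + i.+1)%N k -> Q (i1 + i)%N k by move=> i k; rewrite addnS; apply: hi.
have [N hN] := ih (fun i k => Q (i1 + i)%N k) hi' (fun i k => hk _ _) hn'.
exists (i1 + N)%N => i hiN k.
have := hN (i - i1)%N; rewrite subnKC; last exact: leq_trans (leq_addr _ _) hiN.
by apply; rewrite leq_subRL // ?(leq_trans (leq_addr _ _) hiN).
Qed.

Lemma DS (Q : nat -> nat -> bool) :
  (forall i k, Q i.+1 k -> Q i k) -> (forall i k, Q i k.+1 -> Q i k) ->
  exists N, stable_at Q N.
Proof.
move=> hi hk.
case: (classic (forall i k, Q i k)) => [hall|].
  by exists 0%N => i _ k; rewrite !hall.
move=> /not_all_ex_not [i0 /not_all_ex_not [k0 h0]].
have hn' : ~~ Q (i0 + 0)%N k0 by rewrite addn0; apply/negP.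
have hi' : forall i k, Q (i0 + i.+1)%N k -> Q (i0 + i)%N k by move=> i k; rewrite addnS; apply: hi.
have [N hN] := @DS_aux k0 (fun i k => Q (i0 + i)%N k) hi' (fun i k => hk _ _) hn'.
exists (i0 + N)%N => i hiN k.
have := hN (i - i0)%N; rewrite subnKC; last exact: leq_trans (leq_addr _ _) hiN.
by apply; rewrite leq_subRL // ?(leq_trans (leq_addr _ _) hiN).
Qed.

Lemma comb (f : nat -> nat -> nat) m :
  (forall i k, f i.+1 k <= f i k)%N -> (forall i k, f i k.+1 <= f i k)%N ->
  (forall i k, f i k <= m)%N ->
  exists N, forall i, (N <= i)%N -> forall k, f i k = f N k.
Proof.
move=> hi hk hm.
have hj : forall j, exists N, stable_at (fun i k => j <= f i k)%N N.
  move=> j; apply: DS => i k h; apply: leq_trans h _; [exact: hi | exact: hk].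
have hall : forall m', exists N, forall j, (j <= m')%N -> stable_at (fun i k => j <= f i k)%N N.
  elim=> [|m' [N hN]].
    have [N hN] := hj 0%N; exists N => j; rewrite leqn0 => /eqP ->; exact: hN.
  have [N' hN'] := hj m'.+1.
  exists (maxn N N') => j; rewrite leq_eqVlt => /orP[/eqP ->|hjm].
    exact: stable_mono hN' (leq_maxr _ _).
  exact: stable_mono (hN _ hjm) (leq_maxl _ _).
have [N hN] := hall m.
exists N => i hiN k; apply/eqP; rewrite eqn_leq; apply/andP; split.
  by have := hN _ (hm i k) i hiN k; rewrite leqnn => /esym ->.
by have := hN _ (hm N k) i hiN k; rewrite leqnn => ->.
Qed.

Section Mod.
Variables (gT : finGroupType) (D : idomainType) (A : lmodType D) (act : gT -> A -> A).
Variables (P : D -> Prop) (pi : D) (r : nat).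
Hypotheses (hDG : DG_module act) (hP : maximal_ideal P) (hPm : P_module A P).
Hypotheses (hN : noetherian_ring D) (Ppi : P pi).
Hypothesis hpi : forall p, P p -> exists u e, ~ P u /\ u * p = e * pi.
Hypothesis hsr : forall s : seq A, exists t : seq A, (size t <= r)%N /\ generates act t (DGgen act s).

Let PI := P_ideal hP.

Lemma pow_annP (a : A) p : P p -> exists n, p ^+ n *: a = 0.
Proof.
move=> Pp; have [n hn] := hPm a; exists n.
have := hn (nseq n p) (size_nseq _ _).
rewrite big_nseq iter_mulr_1; apply=> q; rewrite mem_nseq => /andP[_ /eqP ->] //.
Qed.

Lemma unit_act (a : A) s : ~ P s -> exists c, (c * s) *: a = a.
Proof.
move=> ns; have [p [e [Pp h1]]] := comax hP ns.
have [n hn] := pow_annP a Pp.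
have hc : e * (\sum_(i < n) p ^+ i) * s = 1 - p ^+ n.
  have -> : 1 - p ^+ n = - (p ^+ n - 1) by rewrite opprB.
  have es : e * s = 1 - p by rewrite h1 addrC addKr.
  by rewrite subrX1 mulrAC es; ring.
exists (e * \sum_(i < n) p ^+ i).
by rewrite hc scalerBl hn subr0 scale1r.
Qed.

Lemma notP_inj s (a : A) : ~ P s -> s *: a = 0 -> a = 0.
Proof.
move=> ns h; have [c hc] := unit_act a ns.
by rewrite -hc -scalerA h scaler0.
Qed.

Lemma soc_P d (z : A) : pi *: z = 0 -> P d -> d *: z = 0.
Proof.
move=> hz Pd; have [u [e [nu he]]] := hpi Pd.
apply: (notP_inj nu); rewrite scalerA he -scalerA hz scaler0 //.
Qed.

Lemma pi_neq0 p : P p -> p != 0 -> pi != 0.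
Proof.
move=> Pp p0; have [u [e [nu he]]] := hpi Pp.
apply/eqP => pi0; move: he; rewrite pi0 mulr0 => /eqP; rewrite mulf_eq0 (negbTE p0) orbF.
by move/eqP => u0; apply: nu; rewrite u0; exact: ideal0 PI.
Qed.

Definition indep (zs : seq A) :=
  (forall i, (i < size zs)%N -> pi *: zs`_i = 0) /\
  forall ds : nat -> D, \sum_(i < size zs) ds i *: zs`_i = 0 -> forall i, (i < size zs)%N -> P (ds i).

Lemma act0 g : act g 0 = 0.
Proof.
case: hDG => hadd _ _ _.
have h := hadd g 0 0; rewrite addr0 in h.
by apply: (addrI (act g 0)); rewrite -h addr0.
Qed.

Lemma act_sum g n (F : 'I_n -> A) : act g (\sum_(i < n) F i) = \sum_(i < n) act g (F i).
Proof.
case: hDG => hadd _ _ _.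
exact: (big_morph (act g) (hadd g) (act0 g)).
Qed.

Lemma indep_bound zs : indep zs -> (size zs <= r * #|gT|)%N.
Proof.
move=> [hsoc hrel]; rewrite leqNgt; apply/negP => hbig.
have [t [ht gen]] := hsr zs.
pose Y := [seq act g w | g <- enum gT, w <- t].
pose M := size Y.
have hM : (M < size zs)%N.
  apply: leq_ltn_trans hbig; rewrite /M size_allpairs -cardE mulnC.
  by rewrite leq_mul2r ht orbT.
pose span a := exists x : 'I_M -> D, a = \sum_(c < M) x c *: Y`_c.
have sp0 : span 0 by exists (fun _ => 0); rewrite big1 // => c _; rewrite scale0r.
have spD : forall a b, span a -> span b -> span (a + b).
  move=> a b [x ->] [y ->]; exists (fun c => x c + y c).
  by rewrite -big_split; apply: eq_bigr => c _; rewrite scalerDl.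
have spZ : forall (d : D) a, span a -> span (d *: a).
  move=> d a [x ->]; exists (fun c => d * x c).
  by rewrite scaler_sumr; apply: eq_bigr => c _; rewrite scalerA.
have spY : forall y, y \in Y -> span y.
  move=> y hy; have hi : (index y Y < M)%N by rewrite index_mem.
  pose c0 := Ordinal hi.
  exists (fun c => if c == c0 then 1 else 0).
  rewrite (bigD1 c0) //= eqxx scale1r big1 ?addr0; first by rewrite nth_index.
  by move=> c /negbTE ->; rewrite scale0r.
have spSum : forall n (F : 'I_n -> A), (forall i, span (F i)) -> span (\sum_(i < n) F i).
  move=> n F hF; elim/big_ind: _ => //; exact: spD.
have hsub : DGsubmodule act span.
  split; first by split.
  case: hDG => hadd hscal _ hmul.
  move=> g a [x ->]; rewrite act_sum; apply: spSum => c; rewrite hscal; apply: spZ.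
  apply: spY.
  have /allpairsP [[h w] [hh hw ->]] : Y`_c \in Y by exact: (mem_nth 0 (ltn_ord c)).
  rewrite /= -hmul; apply: allpairs_f => //; by rewrite mem_enum.
have zspan : forall i, (i < size zs)%N -> span zs`_i.
  move=> i hi.
  have hz : DGgen act t zs`_i := (gen zs`_i).2 (fun B hB1 hB => hB _ (mem_nth 0 hi)).
  apply: hz => // w hw; apply: spY.
  have -> : w = act 1%g w by case: hDG => _ _ h1 _; rewrite h1.
  by apply: allpairs_f => //; rewrite mem_enum.
pose n := size zs.
have ex : forall i : 'I_n, exists x : 'I_M -> D, zs`_i = \sum_(c < M) x c *: Y`_c.
  by move=> i; exact: zspan i (ltn_ord i).
have [xs hxs] := fin_all_exists ex.
pose X : 'M[D]_(n, M) := \matrix_(i, c) xs i c.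
have rel : forall d : 'rV[D]_n, d *m X = 0 -> forall i, P (d 0 i).
  move=> d hd i1.
  pose ds (k : nat) := if (insub k : option 'I_n) is Some j then d 0 j else 0.
  have dsE : forall j : 'I_n, ds j = d 0 j by move=> j; rewrite /ds valK.
  rewrite -dsE; apply: hrel (ltn_ord i1).
  under eq_bigr => j _ do rewrite dsE.
  transitivity (\sum_(c < M) (d *m X) 0 c *: Y`_c); last first.
    by rewrite hd big1 // => c _; rewrite mxE scale0r.
  under eq_bigr => i _ do rewrite (hxs i) scaler_sumr.
  rewrite exchange_big; apply: eq_bigr => c _; rewrite !mxE scaler_suml.
  by apply: eq_bigr => i _; rewrite scalerA mxE.
have [d [d0 dX]] := lin_dep X hM.
have [i0 hi0] : exists i0, d 0 i0 != 0.
  apply: NNPP => hno; move/negP: d0; apply; apply/eqP/rowP => i.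
  rewrite mxE; apply/eqP; apply: NNPP => h; apply: hno; exists i; exact/negP.
have pi0 : pi != 0 := pi_neq0 (rel d dX i0) hi0.
apply: (val_bound hP hN Ppi pi0 hi0).
have desc : forall k, exists U (d' : 'rV[D]_n), [/\ ~ P U, d' *m X = 0 & U *: d = pi ^+ k *: d'].
  elim=> [|k [U [d' [nU hX hU]]]].
    by exists 1, d; split; [exact: P_not1 hP| by [] | rewrite !scale1r].
  have hPd : forall i, P (d' 0 i) := rel d' hX.
  have ex2 : forall i : 'I_n, exists ue : D * D, ~ P ue.1 /\ ue.1 * d' 0 i = ue.2 * pi.
    by move=> i; have [u [e [nu he]]] := hpi (hPd i); exists (u, e).
  have [ue hue] := fin_all_exists ex2.
  pose V := \prod_(i < n) (ue i).1.
  pose d'' : 'rV[D]_n := \row_i ((ue i).2 * \prod_(l < n | l != i) (ue l).1).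
  have Vd : V *: d' = pi *: d''.
    apply/rowP => i; rewrite !mxE.
    have Vi : V = (ue i).1 * \prod_(l < n | l != i) (ue l).1 by rewrite /V (bigD1 i).
    have he := (hue i).2.
    by rewrite Vi mulrAC he; ring.
  exists (V * U), d''; split.
  - apply: (notP_mul hP) => //; apply: (notP_prod hP) => i; exact: (hue i).1.
  - apply/matrixP => a b; apply/eqP.
    have : (pi *: d'') *m X = 0 by rewrite -Vd -scalemxAl hX scaler0.
    move/(congr1 (fun Mx : 'M_(1, M) => Mx a b)); rewrite -scalemxAl !mxE => /eqP.
    by rewrite mulf_eq0 (negbTE pi0).
  - by rewrite -scalerA hU scalerA mulrC -scalerA Vd scalerA -exprSr.
move=> k; have [U [d' [nU _ hU]]] := desc k.
exists U, (d' 0 i0); split=> //.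
by move: (congr1 (fun Mx : 'rV_n => Mx 0 i0) hU); rewrite !mxE => ->; exact: mulrC.
Qed.

Let m := (r * #|gT|)%N.

Definition pb (Q : Prop) : bool := if excluded_middle_informative Q then true else false.
Lemma pbP Q : pb Q <-> Q.
Proof. by rewrite /pb; case: excluded_middle_informative. Qed.
Lemma pbT (Q : Prop) : Q -> pb Q.
Proof. by rewrite /pb; case: excluded_middle_informative. Qed.
Lemma pbE (Q : Prop) : pb Q -> Q.
Proof. by rewrite /pb; case: excluded_middle_informative. Qed.

Definition indepIn (W : A -> Prop) zs := indep zs /\ forall i, (i < size zs)%N -> W zs`_i.
Definition dimA (W : A -> Prop) : nat :=
  \max_(k < m.+1 | pb (exists zs, size zs = k /\ indepIn W zs)) k.

Lemma dim_le W : (dimA W <= m)%N.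
Proof. by apply/bigmax_leqP => k _; rewrite -ltnS. Qed.

Lemma dim_ge W zs : indepIn W zs -> (size zs <= dimA W)%N.
Proof.
move=> h; have hs : (size zs < m.+1)%N by rewrite ltnS; apply: indep_bound h.1.
have := @leq_bigmax_cond _ (fun k : 'I_m.+1 => pb (exists zs, size zs = k /\ indepIn W zs))
  (fun k => nat_of_ord k) (Ordinal hs).
by apply; apply: pbT; exists zs.
Qed.

Lemma indep_nil : indep [::].
Proof. by split=> [i|ds _ i]. Qed.

Lemma dim_attain W : exists zs, indepIn W zs /\ size zs = dimA W.
Proof.
have hc : (0 < #|[pred k : 'I_m.+1 | pb (exists zs, size zs = k /\ indepIn W zs)]|)%N.
  apply/card_gt0P; exists ord0; rewrite inE /=; apply: pbT; exists [::]; split; first by [].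
  split; first exact: indep_nil.
  by move=> i.
case: (eq_bigmax_cond (fun k : 'I_m.+1 => nat_of_ord k) hc) => k0 hk0 heq.
have e : dimA W = k0 := heq.
move: hk0; rewrite inE => /pbE [zs [hsz hin]].
by exists zs; split=> //; rewrite e.
Qed.

Lemma dim_mono (W W' : A -> Prop) : (forall z, W z -> W' z) -> (dimA W <= dimA W')%N.
Proof.
move=> sub; have [zs [[hi hW] <-]] := dim_attain W.
by apply: dim_ge; split=> // i /hW; apply: sub.
Qed.

Lemma Dsub_sum (W : A -> Prop) n (F : 'I_n -> A) : Dsubmodule W -> (forall i, W (F i)) ->
  W (\sum_(i < n) F i).
Proof.
case=> h0 hD _ hF; elim/big_ind: _ => //.
Qed.

Lemma dim_strict (W W' : A -> Prop) w : Dsubmodule W -> (forall z, W z -> W' z) ->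
  W' w -> ~ W w -> pi *: w = 0 -> (dimA W < dimA W')%N.
Proof.
move=> hW sub hw nw pw.
have [zs [[[hsoc hrel] hin] <-]] := dim_attain W.
have -> : (size zs).+1 = size (rcons zs w) by rewrite size_rcons.
apply: dim_ge; split; first split.
- move=> i; rewrite size_rcons ltnS nth_rcons leq_eqVlt => /orP[/eqP ->|hi].
    by rewrite ltnn eqxx.
  by rewrite hi; apply: hsoc.
- move=> ds; rewrite size_rcons big_ord_recr /= nth_rcons ltnn eqxx.
  under eq_bigr => i _ do rewrite nth_rcons (ltn_ord i).
  move=> hsum.
  case: (classic (P (ds (size zs)))) => hPn; last first.
    exfalso; apply: nw.
    have [c hc] := unit_act w hPn.
    rewrite -hc -scalerA.
    have -> : ds (size zs) *: w = - \sum_(i < size zs) ds i *: zs`_i.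
      by apply/eqP; rewrite -addr_eq0 addrC hsum.
    have [h0 hD hZ] := hW; apply: (hZ).
    rewrite -scaleN1r; apply: (hZ); apply: Dsub_sum => // i.
    by apply: (hZ); apply: hin.
  have hsum' : \sum_(i < size zs) ds i *: zs`_i = 0.
    by move: hsum; rewrite (soc_P pw hPn) addr0.
  move=> i; rewrite ltnS leq_eqVlt => /orP[/eqP ->|hi] //.
  exact: hrel hsum' i hi.
- move=> i; rewrite size_rcons ltnS nth_rcons leq_eqVlt => /orP[/eqP ->|hi].
    by rewrite ltnn eqxx.
  by rewrite hi; apply: sub; apply: hin.
Qed.

Definition Vk (B : A -> Prop) k z := pi *: z = 0 /\ exists b, B b /\ z = pi ^+ k *: b.

Lemma V_Dsub B k : Dsubmodule B -> Dsubmodule (Vk B k).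
Proof.
case=> h0 hD hZ; split.
- by split; [rewrite scaler0 | exists 0; rewrite scaler0].
- move=> x y [px [b [hb ex]]] [py [c [hc ey]]]; split.
    by rewrite scalerDr px py addr0.
  by exists (b + c); split; [apply: hD | rewrite scalerDr -ex -ey].
- move=> d x [px [b [hb ex]]]; split.
    by rewrite scalerA mulrC -scalerA px scaler0.
  exists (d *: b); split; first by apply: hZ.
  by rewrite ex !scalerA; congr (_ *: _); ring.
Qed.

Lemma V_det (B B' : A -> Prop) : Dsubmodule B -> Dsubmodule B' -> (forall x, B' x -> B x) ->
  (forall k z, Vk B k z -> Vk B' k z) -> forall x, B x -> B' x.
Proof.
move=> hB hB' sub hV x hx.
have [n hn] := pow_annP x Ppi.
elim: n x hx hn => [|n ih] x hx hn.
  by move: hn; rewrite expr0 scale1r => ->; case: hB' .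
have hz : pi *: (pi ^+ n *: x) = 0 by rewrite scalerA -exprS.
have [_ [b' [hb' ez]]] := hV n (pi ^+ n *: x) (conj hz (ex_intro _ x (conj hx erefl))).
have hxb : B (x - b').
  have [_ hD hZ] := hB; apply: hD => //; rewrite -scaleN1r; apply: hZ; exact: sub.
have hb2 : B' (x - b') by apply: ih => //; rewrite scalerBr -ez subrr.
have [_ hD' _] := hB'.
by rewrite -(subrK b' x); apply: hD'.
Qed.

Lemma artinian : artinian_Dmodule A.
Proof.
move=> B hB hdec.
pose f i k := dimA (Vk (B i) k).
have hi : forall i k, (f i.+1 k <= f i k)%N.
  move=> i k; apply: dim_mono => z [pz [b [hb ez]]]; subst z; split=> //.
  by exists b; split=> //; exact: hdec hb.
have hk : forall i k, (f i k.+1 <= f i k)%N.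
  move=> i k; apply: dim_mono => z [pz [b [hb ez]]]; subst z; split=> //.
  exists (pi *: b); split; first by case: (hB i) => _ _ hZ; apply: hZ.
  by rewrite scalerA -exprSr.
have [N hNs] := comb hi hk (fun i k => dim_le _).
exists N => m' hm' x; split.
  move: hm'; move/subnK => <-; elim: (m' - N)%N x => //= n ih x.
  by rewrite addSn => /hdec /ih.
move: x; apply: V_det; [exact: hB | exact: hB | | ].
  move: hm'; move/subnK => <-; elim: (m' - N)%N => //= n ih x.
  by rewrite addSn => /hdec /ih.
move=> k z hz; apply: NNPP => nz.
have hsub : forall y, Vk (B m') k y -> Vk (B N) k y.
  move=> y [py [b [hb ey]]]; subst y; split=> //; exists b; split=> //.
  clear py; move: hb; move: hm'; move/subnK => <-; elim: (m' - N)%N b => //= n ih b.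
  by rewrite addSn => /hdec /ih.
have := dim_strict (V_Dsub k (hB m')) hsub hz nz hz.1.
by rewrite -/(f m' k) -/(f N k) (hNs _ hm') ltnn.
Qed.

End Mod.

Theorem lemma6 (gT : finGroupType) (D : idomainType) (A : lmodType D)
    (act : gT -> A -> A) (P : D -> Prop) (r : nat) :
  dedekind_domain D ->
  [pchar D] =i pred0 ->
  DG_module act ->
  maximal_ideal P ->
  P_module A P ->
  quot_char0 P ->
  special_rank_DG act r ->
  artinian_Dmodule A.
Proof.
move=> hD _ hDG hP hPm _ [hsr _].
have [pi [Ppi hpi]] := exists_pi hP hD.
have hN : noetherian_ring D by case: hD.
exact: (artinian hDG hP hPm hN Ppi hpi hsr).
Qed.
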